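(* Let $\{S_{a^{[k]}}\}_{k\in\mathbb{N}}$ be a $C^0$-convergent non-stationary binary subdivision scheme whose masks have support of fixed size smaller than $n$, and let $\bar p^0\in\mathbb{R}^{n\times m}$ be the matrix whose rows are $n$ initial control points in $\mathbb{R}^m$. Let $S^{[k]}_1,S^{[k]}_2$ be the $n\times n$ level-$k$ matrices described in the context, and define maps on row vectors $A\in\mathbb{R}^n$ by $f_{r,1}(A)=AS^{[1]}_r\bar p^0\in\mathbb{R}^m$ and, for $k>1$, $f_{r,k}(A)=AS^{[k]}_r\in\mathbb{R}^n$, $r=1,2$; let $\mathcal{F}_k(B)=f_{1,k}(B)\cup f_{2,k}(B)$. Then for every constant $C>0$ and every nonempty compact set $\mathbf{A}\subseteq K^{n-1}_C$, the sets $\mathcal{F}_1\circ\mathcal{F}_2\circ\cdots\circ\mathcal{F}_k(\mathbf{A})$ converge as $k\to\infty$ to the same set, namely the limit curve $p^\infty=\bigcup_{\eta\in\{1,2\}^{\mathbb{N}}}q_\eta\subseteq\mathbb{R}^m$ of the subdivision process started from $\bar p^0$.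
   Context: A non-stationary binary subdivision scheme with masks $a^{[k]}=\{a^{[k]}_j\}_{j\in\mathbb{Z}}$ (finitely supported real sequences) refines points by $p^{k+1}_i=\sum_j a^{[k]}_{i-2j}p^k_j$. For $n$ control points, $S^{[k]}_1$ and $S^{[k]}_2$ are the $n\times n$ submatrices of the level-$k$ refinement matrix such that, applied to a vector of $n$ consecutive points, $S^{[k]}_1$ produces the first $n$ and $S^{[k]}_2$ the last $n$ of the refined points; thus the level-$k$ points are $\bigcup_{i_1,\ldots,i_k\in\{1,2\}}\mathrm{rows}(S^{[k]}_{i_k}\cdots S^{[1]}_{i_1}\bar p^0)$. $C^0$-convergence of the scheme implies that for each $\eta=(i_1i_2\ldots)\in\{1,2\}^{\mathbb{N}}$ the matrices $S^{[k]}_{i_k}\cdots S^{[1]}_{i_1}\bar p^0$ converge to an $n\times m$ matrix all of whose rows equal a point $q_\eta\in\mathbb{R}^m$ (the limit point at parameter $\sum_k(i_k-1)2^{-k}$), and the limit curve is $\bigcup_\eta q_\eta$. $K^{n-1}_C=\{(x_1,\ldots,x_n)\in\mathbb{R}^n:\sum_i x_i=1,\ |x_i|\le C\}$. Convergence of sets is in the Hausdorff metric. *)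

(* Defs.v *)
From Stdlib Require Import Reals ZArith.
Open Scope R_scope.

(* Points of R^d are represented as functions nat -> R; only the
   coordinates 0..d-1 are ever used (values beyond are irrelevant).
   Matrices are functions nat -> nat -> R (row, column). *)

Fixpoint sumn (k : nat) (g : nat -> R) : R :=
  match k with O => 0 | S k' => sumn k' g + g k' end.

Definition dist (d : nat) (x y : nat -> R) : R :=
  sqrt (sumn d (fun c => (x c - y c) ^ 2)).

(* a k j = a^{[k]}_j.  Convention (WLOG up to re-indexing): every mask  *)
(* is supported in {0,...,L}.  Under this support hypothesis           *)
(* [refine] is exactly  p^{k+1}_i = sum_j a^{[k]}_{i-2j} p^k_j.        *)
Definition mask := nat -> Z -> R.

Definition refine (a : mask) (L : nat) (k : nat) (p : Z -> R) : Z -> R :=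
  fun i => sumn (S L) (fun t =>
    if Z.even (i - Z.of_nat t)
    then a k (Z.of_nat t) * p ((i - Z.of_nat t) / 2)%Z
    else 0).

Fixpoint level (a : mask) (L : nat) (p0 : Z -> R) (k : nat) : Z -> R :=
  match k with
  | O => p0
  | S k' => refine a L k' (level a L p0 k')
  end.

Definition bounded_data (p0 : Z -> R) : Prop :=
  exists B, forall i, Rabs (p0 i) <= B.

Definition limit_of (a : mask) (L : nat) (p0 : Z -> R) (f : R -> R) : Prop :=
  forall eps, 0 < eps -> exists N, forall k i, (N <= k)%nat ->
    Rabs (level a L p0 k i - f (IZR i / 2 ^ k)) < eps.

Definition C0_convergent (a : mask) (L : nat) : Prop :=
  (forall p0, bounded_data p0 ->
     exists f, continuity f /\ limit_of a L p0 f) /\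
  (exists p0 f, bounded_data p0 /\ limit_of a L p0 f /\ exists t, f t <> 0).

(* The n x n matrices S^{[k]}_1, S^{[k]}_2 (k >= 1, built from          *)
(* a^{[k-1]}).  For n consecutive points p_0..p_{n-1}, the refined      *)
(* points determined by them are those of index i = L-1, ..., 2n-1;     *)
(* S_1 gives the first n (i = L-1+r) and S_2 the last n (i = n+r).      *)
(* [b = false] encodes S_1, [b = true] encodes S_2.                     *)
Definition Smat (a : mask) (L n : nat) (k : nat) (b : bool) : nat -> nat -> R :=
  fun r j =>
    a (Nat.pred k)
      ((if b then Z.of_nat n else (Z.of_nat L - 1)%Z)
       + Z.of_nat r - 2 * Z.of_nat j)%Z.

Definition mmul (n : nat) (M P : nat -> nat -> R) : nat -> nat -> R :=
  fun r c => sumn n (fun j => M r j * P j c).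

Definition vmul (n : nat) (A : nat -> R) (M : nat -> nat -> R) : nat -> R :=
  fun j => sumn n (fun r => A r * M r j).

Fixpoint prodS (a : mask) (L n : nat) (p0 : nat -> nat -> R)
         (eta : nat -> bool) (k : nat) : nat -> nat -> R :=
  match k with
  | O => p0
  | S k' => mmul n (Smat a L n (S k') (eta (S k'))) (prodS a L n p0 eta k')
  end.

Definition limit_curve (a : mask) (L n m : nat) (p0 : nat -> nat -> R)
  : (nat -> R) -> Prop :=
  fun q => exists eta : nat -> bool,
    forall r c, (r < n)%nat -> (c < m)%nat ->
      Un_cv (fun k => prodS a L n p0 eta k r c) (q c).

Definition fmap (a : mask) (L n : nat) (p0 : nat -> nat -> R)
           (k : nat) (b : bool) (A : nat -> R) : nat -> R :=
  match k with
  | S O => fun c => sumn n (fun j => vmul n A (Smat a L n 1 b) j * p0 j c)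
  | _ => vmul n A (Smat a L n k b)
  end.

Definition img (f : (nat -> R) -> (nat -> R)) (X : (nat -> R) -> Prop)
  : (nat -> R) -> Prop := fun y => exists x, X x /\ y = f x.

Definition Fset (a : mask) (L n : nat) (p0 : nat -> nat -> R) (k : nat)
           (X : (nat -> R) -> Prop) : (nat -> R) -> Prop :=
  fun y => img (fmap a L n p0 k false) X y \/ img (fmap a L n p0 k true) X y.

(* Gmid d X = F_2 o F_3 o ... o F_{d+1} (X) *)
Fixpoint Gmid (a : mask) (L n : nat) (p0 : nat -> nat -> R) (d : nat)
         (X : (nat -> R) -> Prop) : (nat -> R) -> Prop :=
  match d with
  | O => X
  | S d' => Gmid a L n p0 d' (Fset a L n p0 (S (S d')) X)
  end.

(* Fcomp k X = F_1 o F_2 o ... o F_k (X)   (for k >= 1) *)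
Definition Fcomp (a : mask) (L n : nat) (p0 : nat -> nat -> R) (k : nat)
           (X : (nat -> R) -> Prop) : (nat -> R) -> Prop :=
  Fset a L n p0 1 (Gmid a L n p0 (Nat.pred k) X).

Definition nonempty (X : (nat -> R) -> Prop) : Prop := exists x, X x.

Definition seq_compact (d : nat) (X : (nat -> R) -> Prop) : Prop :=
  forall u : nat -> (nat -> R), (forall k, X (u k)) ->
    exists (phi : nat -> nat) (x : nat -> R),
      (forall k, (phi k < phi (S k))%nat) /\ X x /\
      forall c, (c < d)%nat -> Un_cv (fun k => u (phi k) c) (x c).

Definition in_K (n : nat) (C : R) (X : (nat -> R) -> Prop) : Prop :=
  forall x, X x -> sumn n x = 1 /\ forall i, (i < n)%nat -> Rabs (x i) <= C.

Definition hausdorff_cv (d : nat) (X : nat -> (nat -> R) -> Prop)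
           (Y : (nat -> R) -> Prop) : Prop :=
  forall eps, 0 < eps -> exists N, forall k, (N <= k)%nat ->
    (forall x, X k x -> exists y, Y y /\ dist d x y < eps) /\
    (forall y, Y y -> exists x, X k x /\ dist d x y < eps).

(* Main.v *)
Require Import Defs.
From Stdlib Require Import Reals ZArith Lia Lra Psatz IndefiniteDescription.
Open Scope R_scope.

Lemma sumn_ext k f g : (forall i, (i < k)%nat -> f i = g i) -> sumn k f = sumn k g.
Proof. induction k; simpl; intros H; [reflexivity|].
  rewrite IHk by (intros; apply H; lia). rewrite H by lia. reflexivity. Qed.

Lemma sumn_plus k f g : sumn k (fun i => f i + g i) = sumn k f + sumn k g.
Proof. induction k; simpl; [ring|]. rewrite IHk; ring. Qed.

Lemma sumn_scal_l k c f : sumn k (fun i => c * f i) = c * sumn k f.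
Proof. induction k; simpl; [ring|]. rewrite IHk; ring. Qed.

Lemma sumn_scal_r k c f : sumn k (fun i => f i * c) = sumn k f * c.
Proof. induction k; simpl; [ring|]. rewrite IHk; ring. Qed.

Lemma sumn_zero k f : (forall i, (i<k)%nat -> f i = 0) -> sumn k f = 0.
Proof. induction k; simpl; intros H; [reflexivity|].
  rewrite IHk by (intros; apply H; lia). rewrite H by lia. ring. Qed.

Lemma sumn_single k f j0 : (j0 < k)%nat ->
  (forall i, (i<k)%nat -> i <> j0 -> f i = 0) -> sumn k f = f j0.
Proof. induction k; intros H1 H2; [lia|]. simpl.
  destruct (Nat.eq_dec j0 k) as [E|E].
  - subst. rewrite sumn_zero. ring. intros; apply H2; lia.
  - rewrite IHk by (first [lia | intros; apply H2; lia]). rewrite (H2 k) by lia. ring. Qed.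

Lemma sumn_swap a b g : sumn a (fun i => sumn b (fun j => g i j)) =
  sumn b (fun j => sumn a (fun i => g i j)).
Proof. induction a; simpl.
  - symmetry; apply sumn_zero; auto.
  - rewrite IHa. rewrite <- sumn_plus. reflexivity. Qed.

Lemma sumn_abs k f : Rabs (sumn k f) <= sumn k (fun i => Rabs (f i)).
Proof. induction k; simpl. rewrite Rabs_R0; lra.
  eapply Rle_trans; [apply Rabs_triang|]. lra. Qed.

Lemma sumn_le k f g : (forall i, (i<k)%nat -> f i <= g i) -> sumn k f <= sumn k g.
Proof. induction k; simpl; intros H; [lra|].
  assert (sumn k f <= sumn k g) by (apply IHk; intros; apply H; lia).
  assert (f k <= g k) by (apply H; lia). lra. Qed.

Lemma sumn_const k c : sumn k (fun _ => c) = INR k * c.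
Proof. induction k; simpl sumn. simpl; ring. rewrite IHk, S_INR; ring. Qed.

Definition Idm (r j : nat) : R := if Nat.eqb r j then 1 else 0.

Lemma mmul_assoc n A B C r c :
  mmul n (mmul n A B) C r c = mmul n A (mmul n B C) r c.
Proof. unfold mmul.
  transitivity (sumn n (fun j => sumn n (fun i => A r i * B i j * C j c))).
  - apply sumn_ext; intros. rewrite <- sumn_scal_r. reflexivity.
  - rewrite sumn_swap. apply sumn_ext; intros. rewrite <- sumn_scal_l.
    apply sumn_ext; intros. ring. Qed.

Lemma vmul_mmul n A M P j :
  vmul n (vmul n A M) P j = vmul n A (mmul n M P) j.
Proof. unfold vmul, mmul.
  transitivity (sumn n (fun i => sumn n (fun r => A r * M r i * P i j))).
  - apply sumn_ext; intros. rewrite <- sumn_scal_r. reflexivity.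
  - rewrite sumn_swap. apply sumn_ext; intros. rewrite <- sumn_scal_l.
    apply sumn_ext; intros. ring. Qed.

Lemma vmul_ext n v w P j : (forall i, (i<n)%nat -> v i = w i) -> vmul n v P j = vmul n w P j.
Proof. intros H; unfold vmul; apply sumn_ext; intros; rewrite H; auto. Qed.

Lemma vmul_Id n v j : (j < n)%nat -> vmul n v Idm j = v j.
Proof. intros Hj; unfold vmul, Idm. rewrite (sumn_single n _ j Hj).
  rewrite Nat.eqb_refl; ring. intros i Hi Hij. apply Nat.eqb_neq in Hij. rewrite Hij; ring. Qed.

Lemma mmul_Id n Q r c : (r < n)%nat -> mmul n Idm Q r c = Q r c.
Proof. intros Hr; unfold mmul, Idm. rewrite (sumn_single n _ r Hr).
  rewrite Nat.eqb_refl; ring. intros i Hi Hij. apply not_eq_sym, Nat.eqb_neq in Hij. rewrite Hij; ring. Qed.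

Fixpoint Mprod a L n (eta : nat -> bool) (d : nat) : nat -> nat -> R :=
  match d with O => Idm
  | S d' => mmul n (Smat a L n (S (S d')) (eta (S (S d')))) (Mprod a L n eta d') end.

Lemma Mprod_ext a L n eta eta' d : (forall i, (2 <= i)%nat -> (i <= S d)%nat -> eta i = eta' i) ->
  Mprod a L n eta d = Mprod a L n eta' d.
Proof. induction d; intros H; simpl; [reflexivity|].
  rewrite IHd by (intros; apply H; lia). rewrite H by lia. reflexivity. Qed.

Lemma Fset_inv a L n p0 k X y : Fset a L n p0 k X y -> exists b A, X A /\ y = fmap a L n p0 k b A.
Proof. intros [[A [HA E]]|[A [HA E]]]; eauto. Qed.

Lemma Fset_intro a L n p0 k X A b : X A -> Fset a L n p0 k X (fmap a L n p0 k b A).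
Proof. intros H; destruct b; [right|left]; exists A; auto. Qed.

Definition upd (eta : nat -> bool) i b := fun j => if Nat.eqb j i then b else eta j.

Lemma Gmid_inv a L n p0 d : forall X v, Gmid a L n p0 d X v ->
  exists A eta, X A /\ forall j, (j<n)%nat -> v j = vmul n A (Mprod a L n eta d) j.
Proof.
  induction d; intros X v H; simpl in H.
  - exists v, (fun _ => false). split; auto. intros j Hj. rewrite vmul_Id; auto.
  - destruct (IHd _ _ H) as [A' [eta [HA' Hv]]].
    destruct (Fset_inv _ _ _ _ _ _ _ HA') as [b [A [HA E]]]. subst A'.
    exists A, (upd eta (S (S d)) b). split; auto. intros j Hj. rewrite Hv by auto.
    simpl fmap. rewrite vmul_mmul. simpl Mprod. unfold upd at 1. rewrite Nat.eqb_refl.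
    rewrite (Mprod_ext a L n (upd eta (S (S d)) b) eta). reflexivity.
    intros i H1 H2. unfold upd. replace (Nat.eqb i (S (S d))) with false; auto.
    symmetry; apply Nat.eqb_neq; lia.
Qed.

Lemma Gmid_intro a L n p0 d : forall X A eta, X A -> exists v, Gmid a L n p0 d X v /\
  forall j, (j<n)%nat -> v j = vmul n A (Mprod a L n eta d) j.
Proof.
  induction d; intros X A eta H.
  - exists A; split; auto. intros; rewrite vmul_Id; auto.
  - destruct (IHd (Fset a L n p0 (S (S d)) X) (fmap a L n p0 (S (S d)) (eta (S (S d))) A) eta)
      as [v [Hv1 Hv2]]. apply Fset_intro; auto.
    exists v; split; auto. intros j Hj. rewrite Hv2 by auto. simpl fmap.
    rewrite vmul_mmul. reflexivity.
Qed.

Lemma prodS_Mprod a L n p0 eta d : forall r c, (r<n)%nat ->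
  prodS a L n p0 eta (S d) r c = mmul n (Mprod a L n eta d) (mmul n (Smat a L n 1 (eta 1%nat)) p0) r c.
Proof.
  induction d; intros r c Hr.
  - simpl Mprod. rewrite mmul_Id; auto.
  - change (prodS a L n p0 eta (S (S d)) r c) with
      (mmul n (Smat a L n (S (S d)) (eta (S (S d)))) (prodS a L n p0 eta (S d)) r c).
    simpl Mprod. rewrite mmul_assoc. unfold mmul at 1 3. apply sumn_ext; intros j Hj.
    rewrite IHd; auto.
Qed.

Lemma Fcomp_inv a L n p0 k X x : Fcomp a L n p0 (S k) X x ->
  exists A eta, X A /\ forall c, x c = vmul n A (prodS a L n p0 eta (S k)) c.
Proof.
  unfold Fcomp; simpl Nat.pred. intros H.
  destruct (Fset_inv _ _ _ _ _ _ _ H) as [b [A'' [HA'' E]]]. subst x.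
  destruct (Gmid_inv _ _ _ _ _ _ _ HA'') as [A [eta [HA Hv]]].
  exists A, (upd eta 1 b). split; auto. intros c.
  change (fmap a L n p0 1 b A'' c) with (vmul n (vmul n A'' (Smat a L n 1 b)) p0 c).
  rewrite vmul_mmul. rewrite (vmul_ext n A'' (vmul n A (Mprod a L n eta k))) by auto.
  rewrite vmul_mmul. unfold vmul at 1 2. apply sumn_ext; intros s Hs.
  rewrite prodS_Mprod by auto. unfold upd at 2. simpl Nat.eqb.
  rewrite (Mprod_ext a L n (upd eta 1 b) eta). reflexivity.
  intros i H1 H2. unfold upd. replace (Nat.eqb i 1) with false; auto.
  symmetry; apply Nat.eqb_neq; lia.
Qed.

Lemma Fcomp_intro a L n p0 k X A eta : X A ->
  exists x, Fcomp a L n p0 (S k) X x /\ forall c, x c = vmul n A (prodS a L n p0 eta (S k)) c.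
Proof.
  intros HA. destruct (Gmid_intro a L n p0 k X A eta HA) as [v [Hv1 Hv2]].
  exists (fmap a L n p0 1 (eta 1%nat) v). split.
  - unfold Fcomp; simpl Nat.pred. apply Fset_intro; auto.
  - intros c. change (fmap a L n p0 1 (eta 1%nat) v c) with (vmul n (vmul n v (Smat a L n 1 (eta 1%nat))) p0 c).
    rewrite vmul_mmul. rewrite (vmul_ext n v (vmul n A (Mprod a L n eta k))) by auto.
    rewrite vmul_mmul. unfold vmul at 1 2. apply sumn_ext; intros s Hs.
    rewrite prodS_Mprod by auto. reflexivity.
Qed.

Definition off (L n : nat) (b : bool) : Z := if b then Z.of_nat n else (Z.of_nat L - 1)%Z.
Fixpoint W L n (eta : nat -> bool) k : Z :=
  match k with O => 0%Z | S k' => (2 * W L n eta k' + off L n (eta (S k')))%Z end.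
Definition dat n (p0 : nat -> nat -> R) c : Z -> R :=
  fun i => if andb (Z.leb 0 i) (Z.ltb i (Z.of_nat n)) then p0 (Z.to_nat i) c else 0.

Lemma even_ex x : Z.even x = true -> exists m, x = (2 * m)%Z.
Proof. intros H. apply Z.even_spec in H. destruct H as [m Hm]. exists m; lia. Qed.

Lemma even_2 m : Z.even (2 * m) = true.
Proof. apply Z.even_spec. exists m; lia. Qed.

Lemma refine_window a L n k g Wz b r :
  (forall k j, (j < 0 \/ Z.of_nat L < j)%Z -> a k j = 0) -> (S L < n)%nat -> (r < n)%nat ->
  refine a L k g (2 * Wz + off L n b + Z.of_nat r)%Z =
  sumn n (fun j => a k (off L n b + Z.of_nat r - 2 * Z.of_nat j)%Z * g (Wz + Z.of_nat j)%Z).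
Proof.
  intros Hsupp HL Hr.
  set (e := (off L n b + Z.of_nat r)%Z).
  assert (He : (Z.of_nat L - 1 <= e <= 2 * Z.of_nat n - 1)%Z) by (unfold e, off; destruct b; lia).
  unfold refine.
  transitivity (sumn (S L) (fun t => sumn n (fun j =>
     if Z.eq_dec (Z.of_nat t) (e - 2 * Z.of_nat j) then a k (Z.of_nat t) * g (Wz + Z.of_nat j)%Z else 0))).
  - apply sumn_ext; intros t Ht.
    replace (2 * Wz + off L n b + Z.of_nat r - Z.of_nat t)%Z with (2 * Wz + (e - Z.of_nat t))%Z by (unfold e; lia).
    destruct (Z.even (2 * Wz + (e - Z.of_nat t))) eqn:Ev.
    + destruct (even_ex _ Ev) as [mm Hm].
      assert (Hj : (0 <= mm - Wz < Z.of_nat n)%Z) by lia.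
      rewrite (sumn_single n _ (Z.to_nat (mm - Wz))).
      * rewrite Z2Nat.id by lia. destruct (Z.eq_dec _ _) as [_|C]; [|lia].
        rewrite Hm. f_equal. f_equal. rewrite Z.mul_comm, Z.div_mul by lia. lia.
      * lia.
      * intros i Hi Hne. destruct (Z.eq_dec _ _); [lia|ring].
    + rewrite sumn_zero; auto. intros j Hj. destruct (Z.eq_dec _ _) as [E|]; [|ring].
      exfalso. replace (2 * Wz + (e - Z.of_nat t))%Z with (2 * (Wz + Z.of_nat j))%Z in Ev by lia.
      rewrite even_2 in Ev; discriminate.
  - rewrite sumn_swap. apply sumn_ext; intros j Hj. fold e.
    destruct (Z.le_gt_cases 0 (e - 2 * Z.of_nat j)) as [H1|H1];
    [destruct (Z.le_gt_cases (e - 2 * Z.of_nat j) (Z.of_nat L)) as [H2|H2]|].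
    + rewrite (sumn_single (S L) _ (Z.to_nat (e - 2 * Z.of_nat j))).
      * rewrite Z2Nat.id by lia. destruct (Z.eq_dec _ _); [reflexivity|lia].
      * lia.
      * intros i Hi Hne. destruct (Z.eq_dec _ _); [lia|ring].
    + rewrite Hsupp by lia. rewrite sumn_zero. ring.
      intros i Hi. destruct (Z.eq_dec _ _); [lia|ring].
    + rewrite Hsupp by lia. rewrite sumn_zero. ring.
      intros i Hi. destruct (Z.eq_dec _ _); [lia|ring].
Qed.

Lemma prodS_level a L n p0 eta c
  (Hsupp : forall k j, (j < 0 \/ Z.of_nat L < j)%Z -> a k j = 0) (HL : (S L < n)%nat) :
  forall k r, (r<n)%nat ->
  prodS a L n p0 eta k r c = level a L (dat n p0 c) k (W L n eta k + Z.of_nat r)%Z.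
Proof.
  induction k; intros r Hr.
  - simpl. unfold dat. simpl Z.add. rewrite Nat2Z.id.
    replace (Z.leb 0 (Z.of_nat r) && Z.ltb (Z.of_nat r) (Z.of_nat n))%bool with true. reflexivity.
    symmetry; apply Bool.andb_true_iff; split; [apply Z.leb_le|apply Z.ltb_lt]; lia.
  - change (prodS a L n p0 eta (S k) r c) with
      (mmul n (Smat a L n (S k) (eta (S k))) (prodS a L n p0 eta k) r c).
    change (level a L (dat n p0 c) (S k) (W L n eta (S k) + Z.of_nat r)%Z) with (refine a L k (level a L (dat n p0 c) k) (2 * W L n eta k + off L n (eta (S k)) + Z.of_nat r)%Z). rewrite refine_window by auto.
    unfold mmul. apply sumn_ext; intros j Hj. rewrite IHk by auto. reflexivity.
Qed.

Lemma Rabs_le_between x y : Rabs x <= y -> - y <= x <= y.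
Proof. intros H. unfold Rabs in H. destruct (Rcase_abs x); split; lra. Qed.

Definition w L n eta k := IZR (W L n eta k) * / 2 ^ k.

Lemma off_bound L n b : (S L < n)%nat -> Rabs (IZR (off L n b)) <= INR n.
Proof. intros H. assert (- Z.of_nat n <= off L n b <= Z.of_nat n)%Z by (unfold off; destruct b; lia).
  rewrite INR_IZR_INZ. apply Rabs_le. rewrite <- opp_IZR. split; apply IZR_le; lia. Qed.

Lemma pow2_pos k : 0 < 2 ^ k.
Proof. apply pow_lt; lra. Qed.

Lemma w_S L n eta k : w L n eta (S k) = w L n eta k + IZR (off L n (eta (S k))) * / 2 ^ k * / 2.
Proof. unfold w. change (W L n eta (S k)) with (2 * W L n eta k + off L n (eta (S k)))%Z.
  rewrite plus_IZR, mult_IZR. simpl pow. field. apply Rgt_not_eq, pow2_pos. Qed.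

Lemma inv_pow_S k : / 2 ^ (S k) = / 2 ^ k * / 2.
Proof. simpl pow. rewrite Rinv_mult. ring. Qed.

Lemma w_diff L n eta (HL : (S L < n)%nat) : forall d k,
  Rabs (w L n eta (k + d) - w L n eta k) <= INR n * (/ 2 ^ k - / 2 ^ (k + d)).
Proof.
  induction d; intros k.
  - rewrite Nat.add_0_r. unfold Rminus. rewrite !Rplus_opp_r, Rabs_R0. lra.
  - rewrite Nat.add_succ_r, w_S, inv_pow_S.
    specialize (IHd k). pose proof (off_bound L n (eta (S (k + d))) HL).
    set (u := / 2 ^ (k + d)) in *. assert (0 < u) by (apply Rinv_0_lt_compat, pow2_pos).
    set (o := IZR (off L n (eta (S (k + d))))) in *.
    replace (w L n eta (k + d) + o * u * / 2 - w L n eta k) with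
       ((w L n eta (k + d) - w L n eta k) + o * (u * /2)) by ring.
    eapply Rle_trans; [apply Rabs_triang|]. rewrite Rabs_mult, (Rabs_right (u * /2)) by lra.
    assert (Rabs o * (u * /2) <= INR n * (u * /2)) by (apply Rmult_le_compat_r; lra).
    lra.
Qed.

Lemma inv_pow_le k d : / 2 ^ (k + d) <= / 2 ^ k.
Proof. apply Rinv_le_contravar. apply pow2_pos. apply Rle_pow; [lra|lia]. Qed.

Lemma inv_pow_le1 k : / 2 ^ k <= 1.
Proof. rewrite <- Rinv_1. apply Rinv_le_contravar; [lra|]. apply pow_R1_Rle; lra. Qed.

Lemma w_bound L n eta (HL : (S L < n)%nat) k : Rabs (w L n eta k) <= INR n.
Proof. pose proof (w_diff L n eta HL k 0). simpl in H.
  unfold w at 2 in H. simpl in H. rewrite Rmult_0_l, Rminus_0_r in H.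
  assert (0 < / 2 ^ k) by (apply Rinv_0_lt_compat, pow2_pos). pose proof (pos_INR n). nra. Qed.

Lemma s_eq L n eta k r : IZR (W L n eta k + Z.of_nat r) / 2 ^ k = w L n eta k + INR r * / 2 ^ k.
Proof. unfold w, Rdiv. rewrite plus_IZR, <- INR_IZR_INZ. ring. Qed.

Lemma col_cauchy a L n p0 c
  (Hsupp : forall k j, (j < 0 \/ Z.of_nat L < j)%Z -> a k j = 0) (HL : (S L < n)%nat)
  f (Hf : continuity f) (Hlim : limit_of a L (dat n p0 c) f) :
  forall eps, 0 < eps -> exists N, forall eta k d r r', (N <= k)%nat -> (r < n)%nat -> (r' < n)%nat ->
    Rabs (prodS a L n p0 eta k r c - prodS a L n p0 eta (k + d) r' c) < eps.
Proof.
  intros eps Heps.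
  pose proof (Heine f (fun x => - (2 * INR n) <= x <= 2 * INR n) (compact_P3 _ _) (fun x _ => Hf x)) as HU.
  assert (He3 : 0 < eps / 3) by lra.
  destruct (HU (mkposreal _ He3)) as [delta Hdelta]. simpl in Hdelta.
  destruct (Hlim _ He3) as [N1 HN1].
  pose proof (pos_INR n) as Hn0.
  assert (Hd : 0 < delta / (3 * INR n + 1)) by (apply Rdiv_lt_0_compat; [apply cond_pos|lra]).
  assert (Hh : Rabs (/ 2) < 1) by (rewrite Rabs_right; lra).
  destruct (pow_lt_1_zero _ Hh _ Hd) as [N2 HN2].
  exists (Nat.max N1 N2). intros eta k d r r' Hk Hr Hr'.
  rewrite !(prodS_level a L n p0 eta c Hsupp HL) by auto.
  set (i := (W L n eta k + Z.of_nat r)%Z). set (i' := (W L n eta (k + d) + Z.of_nat r')%Z).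
  pose proof (HN1 k i ltac:(lia)) as E1. pose proof (HN1 (k + d)%nat i' ltac:(lia)) as E2.
  set (s := IZR i / 2 ^ k) in *. set (s' := IZR i' / 2 ^ (k + d)) in *.
  assert (Hs : s = w L n eta k + INR r * / 2 ^ k) by apply s_eq.
  assert (Hs' : s' = w L n eta (k + d) + INR r' * / 2 ^ (k + d)) by apply s_eq.
  pose proof (w_bound L n eta HL k) as B1. pose proof (w_bound L n eta HL (k + d)) as B2.
  pose proof (w_diff L n eta HL d k) as B3.
  pose proof (inv_pow_le k d) as P1. pose proof (inv_pow_le1 k) as P2.
  assert (P3 : 0 < / 2 ^ (k + d)) by (apply Rinv_0_lt_compat, pow2_pos).
  assert (R1 : INR r * / 2 ^ k <= INR n * / 2 ^ k) by (apply Rmult_le_compat_r; [lra| apply lt_INR in Hr; lra]).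
  assert (R2 : INR r' * / 2 ^ (k + d) <= INR n * / 2 ^ (k + d)) by (apply Rmult_le_compat_r; [lra| apply lt_INR in Hr'; lra]).
  pose proof (pos_INR r) as R3. pose proof (pos_INR r') as R4.
  assert (R5 : 0 <= INR r * / 2 ^ k) by (apply Rmult_le_pos; lra).
  assert (R6 : 0 <= INR r' * / 2 ^ (k + d)) by (apply Rmult_le_pos; lra).
  assert (R7 : INR n * / 2 ^ (k + d) <= INR n * / 2 ^ k) by (apply Rmult_le_compat_l; lra).
  assert (R8 : INR n * / 2 ^ k <= INR n) by (rewrite <- (Rmult_1_r (INR n)) at 2; apply Rmult_le_compat_l; lra).
  assert (R9 : INR n * (/ 2 ^ k - / 2 ^ (k + d)) <= INR n * / 2 ^ k) by (apply Rmult_le_compat_l; lra).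
  pose proof (HN2 k ltac:(lia)) as Q. rewrite pow_inv, Rabs_right in Q
    by (apply Rle_ge, Rlt_le, Rinv_0_lt_compat, pow2_pos).
  assert (Q2 : (3 * INR n + 1) * / 2 ^ k < delta).
  { apply (Rmult_lt_compat_l (3 * INR n + 1)) in Q; [|lra].
    unfold Rdiv in Q. rewrite <- Rmult_assoc, (Rmult_comm _ delta), Rmult_assoc, Rinv_r, Rmult_1_r in Q; lra. }
  assert (Q3 : 0 <= INR n * / 2 ^ k) by (apply Rmult_le_pos; lra).
  assert (HX1 : - (2 * INR n) <= s <= 2 * INR n) by (apply Rabs_le_between in B1; lra).
  assert (HX2 : - (2 * INR n) <= s' <= 2 * INR n) by (apply Rabs_le_between in B2; apply Rabs_le_between in B3; lra).
  assert (Hss : Rabs (s - s') < delta).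
  { apply Rabs_le_between in B3. apply Rabs_def1; lra. }
  pose proof (Hdelta s s' HX1 HX2 Hss) as E3.
  set (l1 := level a L (dat n p0 c) k i) in *. set (l2 := level a L (dat n p0 c) (k + d) i') in *.
  replace (l1 - l2) with ((l1 - f s) + (f s - f s') + (f s' - l2)) by ring.
  eapply Rle_lt_trans; [apply Rabs_triang|].
  eapply Rle_lt_trans; [apply Rplus_le_compat_r, Rabs_triang|].
  rewrite (Rabs_minus_sym (f s') l2). lra.
Qed.

Lemma sumn_nonneg_le k f j : (forall i, (i<k)%nat -> 0 <= f i) -> (j < k)%nat -> f j <= sumn k f.
Proof. induction k; intros H Hj; [lia|]. simpl.
  assert (0 <= sumn k f) by (rewrite <- (sumn_zero k (fun _ => 0)) by auto; apply sumn_le; intros; apply H; lia).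
  destruct (Nat.eq_dec j k). subst. lra. assert (f j <= sumn k f) by (apply IHk; [intros; apply H; lia|lia]).
  pose proof (H k ltac:(lia)). lra. Qed.

Lemma dat_bounded n p0 c : bounded_data (dat n p0 c).
Proof. exists (sumn n (fun j => Rabs (p0 j c))). intros i. unfold dat.
  destruct (Z.leb 0 i && Z.ltb i (Z.of_nat n))%bool eqn:E.
  - apply Bool.andb_true_iff in E. destruct E as [E1 E2]. apply Z.leb_le in E1. apply Z.ltb_lt in E2.
    apply (sumn_nonneg_le n (fun j => Rabs (p0 j c))). intros; apply Rabs_pos. lia.
  - rewrite Rabs_R0. rewrite <- (sumn_zero n (fun _ => 0)) by auto. apply sumn_le; intros; apply Rabs_pos.
Qed.

Lemma combine m (Q : nat -> nat -> Prop) : (forall c, (c < m)%nat -> exists N, Q c N) ->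
  (forall c N N', (N <= N')%nat -> Q c N -> Q c N') -> exists N, forall c, (c < m)%nat -> Q c N.
Proof. intros H Hm. induction m.
  - exists 0%nat; intros; lia.
  - destruct IHm as [N1 HN1]. intros; apply H; lia.
    destruct (H m ltac:(lia)) as [N2 HN2]. exists (Nat.max N1 N2). intros c Hc.
    destruct (Nat.eq_dec c m). subst. apply (Hm _ N2); auto; lia.
    apply (Hm _ N1); [lia|]. apply HN1; lia.
Qed.

Lemma lim_bound u l x d N : Un_cv u l -> (forall k, (N <= k)%nat -> Rabs (x - u k) < d) -> Rabs (x - l) <= d.
Proof. intros Hu H. destruct (Rle_or_lt (Rabs (x - l)) d) as [|Hlt]; auto. exfalso.
  destruct (Hu (Rabs (x - l) - d)) as [N' HN']. lra.
  specialize (HN' (Nat.max N N') ltac:(lia)). specialize (H (Nat.max N N') ltac:(lia)).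
  unfold Rdist in HN'. pose proof (Rabs_triang (x - u (Nat.max N N')) (u (Nat.max N N') - l)).
  replace (x - u (Nat.max N N') + (u (Nat.max N N') - l)) with (x - l) in H0 by ring. lra.
Qed.

Lemma sqrt_lt_sq s e : 0 < e -> s < e ^ 2 -> sqrt s < e.
Proof. intros He Hs. destruct (Rle_or_lt 0 s).
  - rewrite <- (sqrt_pow2 e) by lra. apply sqrt_lt_1_alt. lra.
  - rewrite sqrt_neg_0 by lra. lra. Qed.

Lemma dist_small m x y eps : 0 < eps ->
  (forall c, (c < m)%nat -> Rabs (x c - y c) <= eps / (INR m + 1)) -> Defs.dist m x y < eps.
Proof. intros He H. unfold Defs.dist. apply sqrt_lt_sq; auto.
  pose proof (pos_INR m). set (d := eps / (INR m + 1)) in *.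
  assert (Hd : d * (INR m + 1) = eps) by (unfold d; field; lra).
  assert (0 < d) by (unfold d; apply Rdiv_lt_0_compat; lra).
  apply Rle_lt_trans with (sumn m (fun _ => d ^ 2)).
  - apply sumn_le; intros c Hc. specialize (H c Hc). apply Rabs_le_between in H. nra.
  - rewrite sumn_const. rewrite <- Hd. nra.
Qed.

Lemma comb_bound n A C P y d : sumn n A = 1 -> (forall i, (i<n)%nat -> Rabs (A i) <= C) ->
  (forall r, (r<n)%nat -> Rabs (P r - y) <= d) -> 0 <= d ->
  Rabs (sumn n (fun r => A r * P r) - y) <= INR n * C * d.
Proof. intros H1 H2 H3 Hd.
  replace (sumn n (fun r => A r * P r) - y) with (sumn n (fun r => A r * (P r - y))).
  - eapply Rle_trans; [apply sumn_abs|].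
    apply Rle_trans with (sumn n (fun _ => C * d)).
    + apply sumn_le; intros i Hi. rewrite Rabs_mult. apply Rmult_le_compat; auto using Rabs_pos.
    + rewrite sumn_const. lra.
  - transitivity (sumn n (fun r => A r * P r + (- y) * A r)).
    apply sumn_ext; intros; ring. rewrite sumn_plus, sumn_scal_l, H1. ring.
Qed.

Theorem mainTheorem10
  (n m L : nat) (a : mask) (p0 : nat -> nat -> R)
  (Hsupp : forall k j, (j < 0 \/ Z.of_nat L < j)%Z -> a k j = 0)
  (HL : (S L < n)%nat)
  (Hconv : C0_convergent a L) :
  forall (C : R) (Aset : (nat -> R) -> Prop),
    0 < C -> nonempty Aset -> seq_compact n Aset -> in_K n C Aset ->
    hausdorff_cv m (fun k => Fcomp a L n p0 k Aset) (limit_curve a L n m p0).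
Proof.
  intros C Aset HC Hne _ HK.
  set (P := prodS a L n p0).
  assert (U : forall eps, 0 < eps -> exists N, forall c, (c < m)%nat -> forall eta k d r r',
     (N <= k)%nat -> (r < n)%nat -> (r' < n)%nat ->
     Rabs (P eta k r c - P eta (k + d)%nat r' c) < eps).
  { intros eps Heps. apply combine.
    - intros c Hc. destruct (proj1 Hconv _ (dat_bounded n p0 c)) as [f [Hf Hl]].
      exact (col_cauchy a L n p0 c Hsupp HL f Hf Hl eps Heps).
    - intros c N N' HNN' HQ eta k d r r' Hk Hr Hr'. apply HQ; auto; lia. }
  assert (Lim : forall eta c, exists l, (c < m)%nat -> forall r, (r < n)%nat -> Un_cv (fun k => P eta k r c) l).
  { intros eta c. destruct (lt_dec c m) as [Hc|Hc]; [|exists 0; intros; lia].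
    assert (Hc0 : Cauchy_crit (fun k => P eta k 0%nat c)).
    { intros e He. destruct (U e He) as [N HN]. exists N. intros k1 k2 H1 H2. unfold Rdist.
      destruct (Nat.le_ge_cases k1 k2) as [Hle|Hle].
      - replace k2 with (k1 + (k2 - k1))%nat by lia. apply HN; auto; lia.
      - replace k1 with (k2 + (k1 - k2))%nat by lia. rewrite Rabs_minus_sym. apply HN; auto; lia. }
    destruct (R_complete _ Hc0) as [l Hl]. exists l. intros _ r Hr e He.
    destruct (Hl (e/2) ltac:(lra)) as [N0 HN0]. destruct (U (e/2) ltac:(lra)) as [N1 HN1].
    exists (Nat.max N0 N1). intros k Hk. unfold Rdist.
    specialize (HN0 k ltac:(lia)). unfold Rdist in HN0.
    specialize (HN1 c Hc eta k 0%nat r 0%nat ltac:(lia) Hr ltac:(lia)). rewrite Nat.add_0_r in HN1.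
    pose proof (Rabs_triang (P eta k r c - P eta k 0%nat c) (P eta k 0%nat c - l)).
    replace (P eta k r c - P eta k 0%nat c + (P eta k 0%nat c - l)) with (P eta k r c - l) in H by ring.
    lra. }
  intros eps Heps.
  pose proof (pos_INR m) as Hm0. pose proof (pos_INR n) as Hn0.
  set (e1 := eps / (INR m + 1)). assert (He1 : 0 < e1) by (unfold e1; apply Rdiv_lt_0_compat; lra).
  set (e2 := e1 / (INR n * C + 1)).
  assert (HnC : 0 <= INR n * C) by (apply Rmult_le_pos; lra).
  assert (He2 : 0 < e2) by (unfold e2; apply Rdiv_lt_0_compat; lra).
  assert (He12 : INR n * C * e2 <= e1).
  { unfold e2. apply Rmult_le_reg_r with (INR n * C + 1); [lra|].
    replace (INR n * C * (e1 / (INR n * C + 1)) * (INR n * C + 1)) with (INR n * C * e1) by (field; lra). nra. }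
  destruct (U e2 He2) as [N HN].
  assert (KB : forall eta k y, (N <= k)%nat -> (forall c, (c < m)%nat -> forall r, (r < n)%nat -> Un_cv (fun k => P eta k r c) (y c)) ->
     forall A, Aset A -> forall c, (c < m)%nat -> Rabs (vmul n A (P eta k) c - y c) <= e1).
  { intros eta k y Hk Hy A HA c Hc. destruct (HK A HA) as [HA1 HA2].
    eapply Rle_trans; [|exact He12]. unfold vmul.
    apply comb_bound; auto; [|lra]. intros r Hr.
    apply (lim_bound _ _ _ _ k (Hy c Hc r Hr)). intros k' Hk'.
    replace k' with (k + (k' - k))%nat by lia. apply HN; auto. }
  exists (S N). intros k Hk. destruct k as [|k0]; [lia|]. split.
  - intros x Hx. destruct (Fcomp_inv a L n p0 k0 Aset x Hx) as [A [eta [HA Hxe]]].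
    set (y := fun c => proj1_sig (constructive_indefinite_description _ (Lim eta c))).
    assert (Hy : forall c, (c < m)%nat -> forall r, (r < n)%nat -> Un_cv (fun k => P eta k r c) (y c)).
    { intros c Hc. unfold y. destruct (constructive_indefinite_description _ (Lim eta c)) as [l Hl]. simpl. auto. }
    exists y. split.
    + exists eta. intros r c Hr Hc. apply Hy; auto.
    + apply dist_small; auto. intros c Hc. rewrite Hxe. apply (KB eta (S k0) y); auto; lia.
  - intros y [eta Hy]. destruct Hne as [A0 HA0].
    destruct (Fcomp_intro a L n p0 k0 Aset A0 eta HA0) as [x [Hx Hxe]].
    exists x. split; auto. apply dist_small; auto. intros c Hc. rewrite Hxe.
    apply (KB eta (S k0) y); auto; try lia.
Qed.
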